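(* Let $T$ be a $(2n-1)$-universal tree. Let $T'$ be any binary rooted tree with $n$ leaves and no degree-1 nodes, and let $c:\mathsf{inner}(T')\to\{0,1\}$ be any assignment. Then there is an injective map $f$ from the nodes of $T'$ to the nodes of $T$ with the following properties: - $f(\mathsf{NCA}(u,v))=\mathsf{NCA}(f(u),f(v))$ for all $u,v$; - every inner node $v$ with $c(v)=0$ is mapped to a node of even depth; - every inner node $v$ with $c(v)=1$ is mapped to a node of odd depth. That is, $T$ is a parity-constrained minor-universal tree for binary trees with $n$ leaves and no degree-1 nodes.
   Context: Trees are rooted; depth is the distance from the root (the root has depth 0); degree is the number of children; $\mathsf{inner}(T')$ is the set of non-leaf nodes of $T'$. $\mathsf{NCA}$ denotes the nearest common ancestor. Cutting: select nodes $a,b$ with $a$ a child of $b$, and remove the subtree rooted at $a$ together with the edge $ab$. Contraction: select an internal node $b$ with parent $a$ and exactly one child $c$, and remove $b$. If $c$ is internal, the children of $c$ become children of $a$ and $c$ is removed. If $c$ is a leaf, it becomes a child of $a$. $T$ implements $T'$ if $T'$ can be obtained (up to isomorphism) from $T$ by a sequence of these operations. $T$ is $m$-universal if it implements every rooted tree with at most $m$ leaves and no degree-1 nodes. *)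

(* Defs.v *)
From mathcomp Require Import all_boot.
From Stdlib Require Import Permutation Relation_Operators.

Set Implicit Arguments.
Unset Strict Implicit.
Unset Printing Implicit Defensive.

(* Rooted (unordered) trees, represented as rose trees; the order of the
   children list is irrelevant up to the permutation operation below. *)
Inductive tree : Type := Node : list tree -> tree.

Definition leaf : tree := Node [::].

Fixpoint nleaves (t : tree) : nat :=
  let: Node cs := t in
  if cs is [::] then 1 else
  (fix sum (l : list tree) : nat :=
     match l with [::] => 0 | x :: l' => nleaves x + sum l' end) cs.

Fixpoint no_deg1 (t : tree) : bool :=
  let: Node cs := t in
  (size cs != 1) &&
  (fix all_nd (l : list tree) : bool :=
     match l with [::] => true | x :: l' => no_deg1 x && all_nd l' end) cs.

Fixpoint full_binary (t : tree) : bool :=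
  let: Node cs := t in
  ((size cs == 0) || (size cs == 2)) &&
  (fix all_b (l : list tree) : bool :=
     match l with [::] => true | x :: l' => full_binary x && all_b l' end) cs.

(* Elementary operations, performed at a node "a" (the parent in the paper's
   descriptions).  Cutting removes a child subtree; contraction removes a
   child b having exactly one child c (if c is internal, c is removed too and
   its children become children of a; if c is a leaf, c becomes a child of a);
   permuting children realises "up to isomorphism". *)
Inductive local_op : tree -> tree -> Prop :=
| op_cut (c1 : list tree) (x : tree) (c2 : list tree) :
    local_op (Node (c1 ++ x :: c2)) (Node (c1 ++ c2))
| op_contract_leaf (c1 c2 : list tree) :
    local_op (Node (c1 ++ Node [:: leaf] :: c2)) (Node (c1 ++ leaf :: c2))
| op_contract_inner (c1 : list tree) (d : tree) (ds c2 : list tree) :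
    local_op (Node (c1 ++ Node [:: Node (d :: ds)] :: c2))
             (Node (c1 ++ (d :: ds) ++ c2))
| op_perm (cs cs' : list tree) :
    Permutation cs cs' -> local_op (Node cs) (Node cs').

Inductive at_some_node (R : tree -> tree -> Prop) : tree -> tree -> Prop :=
| asn_here (t t' : tree) : R t t' -> at_some_node R t t'
| asn_down (c1 : list tree) (x x' : tree) (c2 : list tree) :
    at_some_node R x x' ->
    at_some_node R (Node (c1 ++ x :: c2)) (Node (c1 ++ x' :: c2)).

Definition implements (T T' : tree) : Prop :=
  clos_refl_trans tree (at_some_node local_op) T T'.

Definition universal (m : nat) (T : tree) : Prop :=
  forall T' : tree, no_deg1 T' -> nleaves T' <= m -> implements T T'.

(* Nodes are addressed by paths (sequences of child indices) from the root. *)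
Fixpoint subtree_at (t : tree) (p : seq nat) : option tree :=
  match p with
  | [::] => Some t
  | i :: p' => let: Node cs := t in
      match List.nth_error cs i with
      | Some x => subtree_at x p'
      | None => None
      end
  end.

Definition is_node (t : tree) (p : seq nat) : Prop := subtree_at t p <> None.

Definition is_inner (t : tree) (p : seq nat) : Prop :=
  exists (d : tree) (ds : list tree), subtree_at t p = Some (Node (d :: ds)).

Definition depth (p : seq nat) : nat := size p.

Fixpoint nca (p q : seq nat) : seq nat :=
  match p, q with
  | i :: p', j :: q' => if i == j then i :: nca p' q' else [::]
  | _, _ => [::]
  end.

(* Main.v *)
Require Import Defs.
From mathcomp Require Import all_boot zify.
From Stdlib Require Import Permutation Relation_Operators.
Set Implicit Arguments.
Unset Strict Implicit.

Definition pre (p q : seq nat) := exists r, q = p ++ r.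
Definition incomp p q := ~ pre p q /\ ~ pre q p.

Lemma nca_cat s p q : nca (s ++ p) (s ++ q) = s ++ nca p q.
Proof. elim: s => //= i s ->; by rewrite eqxx. Qed.

Lemma nca_refl p : nca p p = p.
Proof. elim: p => //= i p ->; by rewrite eqxx. Qed.

Lemma nca_sym p q : nca p q = nca q p.
Proof.
elim: p q => [|i p IH] [|j q] //=.
rewrite eq_sym; case: eqP => [->|//]; by rewrite IH.
Qed.

Lemma nca_pre_l p q : pre (nca p q) p.
Proof.
elim: p q => [|i p IH] [|j q] /=.
- by exists [::].
- by exists [::].
- by exists (i :: p).
- case: eqP => _; last by exists (i :: p).
  by case: (IH q) => r e; exists r; rewrite /= -e.
Qed.

Lemma nca_pre_r p q : pre (nca p q) q.
Proof. rewrite nca_sym; exact: nca_pre_l. Qed.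

Lemma pre_nca p q : pre p q -> nca p q = p.
Proof. case=> r ->; elim: p => [|i p IH] /=; [by case: r | by rewrite eqxx IH]. Qed.

Lemma pre_refl p : pre p p.
Proof. by exists [::]; rewrite cats0. Qed.

Lemma pre_trans p q r : pre p q -> pre q r -> pre p r.
Proof. by case=> a -> [b ->]; exists (a ++ b); rewrite catA. Qed.

Lemma pre_size p q : pre p q -> size p <= size q.
Proof. by case=> a ->; rewrite size_cat leq_addr. Qed.

Lemma pre_cat p a : pre p (p ++ a).
Proof. by exists a. Qed.

Lemma pre_catl s p q : pre p q -> pre (s ++ p) (s ++ q).
Proof. by case=> a ->; exists a; rewrite catA. Qed.

Lemma pre_cons i p q : pre (i :: p) (i :: q) <-> pre p q.
Proof. split; [case=> a [] -> | case=> a ->]; by exists a. Qed.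

Lemma pre_nca_common a p q : pre a p -> pre a q -> pre a (nca p q).
Proof. by case=> r -> [s ->]; rewrite nca_cat; exists (nca r s). Qed.

Lemma incomp_cons i p q : incomp (i :: p) (i :: q) <-> incomp p q.
Proof. rewrite /incomp !pre_cons; tauto. Qed.

Lemma incomp_hd a b p q : a != b -> incomp (a :: p) (b :: q).
Proof.
move=> ab; split; case=> r [] e; by rewrite e eqxx in ab.
Qed.

Lemma nca_hd a b p q : a != b -> nca (a :: p) (b :: q) = [::].
Proof. by move=> /negbTE /= ->. Qed.

Lemma incomp_irr p : ~ incomp p p.
Proof. by case=> H _; apply: H; exact: pre_refl. Qed.

Lemma incomp_sym p q : incomp p q -> incomp q p.
Proof. by case. Qed.

Lemma incomp_cat p q a b : incomp p q ->
  nca (p ++ a) (q ++ b) = nca p q /\ incomp (p ++ a) (q ++ b).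
Proof.
elim: p q => [|i p IH] [|j q] H.
- by case: H => H _; case: H; exists [::].
- by case: H => H _; case: H; exists (j :: q).
- by case: H => _ H; case: H; exists (i :: p).
- case: (eqVneq i j) H => [<-|ij] H.
  + have [e h] := IH q (proj1 (incomp_cons i p q) H); rewrite /= eqxx e.
    by split => //; apply/(incomp_cons i).
  + by rewrite !cat_cons !nca_hd //; split => //; apply: incomp_hd.
Qed.

Lemma incomp_pre p q a b : incomp a b -> pre a p -> pre b q ->
  nca p q = nca a b /\ incomp p q.
Proof. move=> H [r ->] [s ->]; exact: incomp_cat. Qed.

Lemma incomp_size p q : incomp p q -> size (nca p q) < size p.
Proof.
move=> H; case: (nca_pre_l p q) => r e.
case: r e => [|x r] e.
- rewrite cats0 in e; case: H => H _; case: H.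
  rewrite e; exact: nca_pre_r.
- by rewrite [in X in _ < X]e size_cat /= addnS ltnS leq_addr.
Qed.

Lemma trich u v : pre u v \/ pre v u \/
  exists w i j p q, i != j /\ u = w ++ i :: p /\ v = w ++ j :: q.
Proof.
elim: u v => [|i u IH] [|j v].
- by left; exact: pre_refl.
- by left; exists (j :: v).
- by right; left; exists (i :: u).
- case: (eqVneq i j) => [<-|ij].
  + case: (IH v) => [H|[H|[w [a [b [p [q [ab [e1 e2]]]]]]]]].
    * by left; apply/pre_cons.
    * by right; left; apply/pre_cons.
    * right; right; exists (i :: w), a, b, p, q; by rewrite e1 e2.
  + right; right; by exists [::], i, j, u, v.
Qed.

Lemma subtree_cat t p q : subtree_at t (p ++ q) =
  match subtree_at t p with Some x => subtree_at x q | None => None end.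
Proof.
elim: p t => [|i p IH] [cs] //=.
case: (List.nth_error cs i) => // x; exact: IH.
Qed.

Lemma node_pre t p q : is_node t q -> pre p q -> is_node t p.
Proof.
rewrite /is_node => H [r e]; move: H; rewrite e subtree_cat.
by case: (subtree_at t p).
Qed.

Lemma nth_error_cat (T : Type) (c1 c2 : seq T) i :
  List.nth_error (c1 ++ c2) i =
  if i < size c1 then List.nth_error c1 i else List.nth_error c2 (i - size c1).
Proof.
elim: c1 i => [|x c1 IH] [|i] //=; by rewrite IH.
Qed.

Definition pdepth (w : seq nat) := odd (size w).

Definition InvP (t t' : tree) (g : seq nat -> seq nat) (pi : seq nat -> bool) :=
 (forall u, is_node t' u -> is_node t (g u)) /\
 (forall u v, is_node t' u -> is_node t' v -> pre u v -> pre (g u) (g v)) /\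
 (forall u v, is_node t' u -> is_node t' v -> incomp u v ->
    incomp (g u) (g v) /\ odd (size (nca (g u) (g v))) = pi (nca u v)).

Lemma InvP_comp t1 t2 t3 g1 g2 pi :
  InvP t1 t2 g1 pdepth -> InvP t2 t3 g2 pi -> InvP t1 t3 (fun p => g1 (g2 p)) pi.
Proof.
move=> [N1 [A1 S1]] [N2 [A2 S2]]; split; [|split].
- by move=> u /N2 /N1.
- move=> u v Hu Hv H; apply: A1; [exact: N2|exact: N2|exact: A2].
- move=> u v Hu Hv H; have [H1 e1] := S2 u v Hu Hv H.
  have [H2 e2] := S1 _ _ (N2 _ Hu) (N2 _ Hv) H1.
  by split => //; rewrite e2 -e1.
Qed.

Lemma InvP_refl t : InvP t t id pdepth.
Proof. by split; [|split] => // u v _ _ H; split. Qed.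

Lemma incomp_catl s p q : incomp p q -> incomp (s ++ p) (s ++ q).
Proof. elim: s => //= i s IH H; apply/incomp_cons; exact: IH. Qed.

Lemma node_cons cs i q : is_node (Node cs) (i :: q) ->
  exists x, List.nth_error cs i = Some x /\ is_node x q.
Proof.
rewrite /is_node /=; case: (List.nth_error cs i) => [x|] H; last by [].
by exists x.
Qed.

Definition gmap (pr : nat -> seq nat) (h : nat -> seq nat -> seq nat) p :=
  match p with [::] => [::] | i :: q => pr i ++ h i q end.

Lemma gmapP cs cs' pr h :
 (forall i x', List.nth_error cs' i = Some x' -> exists x,
    subtree_at (Node cs) (pr i) = Some x /\ odd (size (pr i)) /\ InvP x x' (h i) pdepth) ->
 (forall i j x' y', i != j -> List.nth_error cs' i = Some x' ->
    List.nth_error cs' j = Some y' ->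
    incomp (pr i) (pr j) /\ ~~ odd (size (nca (pr i) (pr j)))) ->
 InvP (Node cs) (Node cs') (gmap pr h) pdepth.
Proof.
move=> Hc Hp; split; [|split].
- case=> [|i q] /=; first by [].
  move/node_cons=> [x' [E Hq]].
  have [x [Ex [_ [N _]]]] := Hc i x' E.
  by rewrite /is_node subtree_cat Ex; apply: N.
- case=> [|i u] v Hu Hv H; first by exists (gmap pr h v).
  case: H => r e; subst v.
  have [x' [E Hu']] := node_cons Hu.
  have [x'' [E' Hv']] := node_cons Hv.
  rewrite E in E'; case: E' => <- in Hv'.
  have [x [Ex [_ [N [A _]]]]] := Hc i x' E.
  rewrite /=; apply: pre_catl; apply: A => //; exact: pre_cat.
- case=> [|i p] [|j q] Hu Hv H.
  + by case: (incomp_irr H).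
  + by case: H => H _; case: H; exists (j :: q).
  + by case: H => _ H; case: H; exists (i :: p).
  have [x' [E Hp']] := node_cons Hu.
  have [y' [E' Hq']] := node_cons Hv.
  case: (eqVneq i j) H E' => [<-|ij] H E'.
  + rewrite E in E'; case: E' => <- in Hq'.
    have H' := proj1 (incomp_cons i p q) H.
    have [x [Ex [Ho [N [A S]]]]] := Hc i x' E.
    have [H1 e1] := S p q Hp' Hq' H'.
    rewrite /= nca_cat size_cat oddD Ho e1 /= eqxx /pdepth /=.
    by split => //; apply: incomp_catl.
  + have [H1 e1] := Hp i j x' y' ij E E'.
    have [e2 H2] := incomp_pre H1 (pre_cat (pr i) (h i p)) (pre_cat (pr j) (h j q)).
    rewrite /= e2 (negbTE ij) /pdepth /=; split => //; exact: negbTE.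
Qed.

Lemma gmap1 cs cs' (s : nat -> nat) h :
  (forall i j, i != j -> s i != s j) ->
  (forall i x', List.nth_error cs' i = Some x' ->
     exists x, List.nth_error cs (s i) = Some x /\ InvP x x' (h i) pdepth) ->
  InvP (Node cs) (Node cs') (gmap (fun i => [:: s i]) h) pdepth.
Proof.
move=> Hs Hc; apply: gmapP.
- move=> i x' /Hc [x [E H]]; exists x; by rewrite /= E.
- move=> i j _ _ ij _ _; split; first exact: incomp_hd (Hs _ _ ij).
  by rewrite /= (negbTE (Hs _ _ ij)).
Qed.

Lemma node_leaf u : is_node leaf u -> u = [::].
Proof. by case: u => // i q /node_cons [x []]; case: i. Qed.

Lemma InvP_leaf : InvP (Node [:: leaf]) leaf (fun _ => [:: 0]) pdepth.
Proof.
split; [|split].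
- by move=> u _.
- move=> u v _ _ _; exact: pre_refl.
- by move=> u v /node_leaf -> /node_leaf -> /incomp_irr.
Qed.

Lemma nth_error_mid (T : Type) (c1 c2 : seq T) x i :
  List.nth_error (c1 ++ x :: c2) i =
  if i < size c1 then List.nth_error c1 i
  else if i == size c1 then Some x else List.nth_error c2 (i - (size c1).+1).
Proof.
rewrite nth_error_cat; case: ltnP => // H.
case: eqP => [->|ne]; first by rewrite subnn.
have -> : i - size c1 = (i - (size c1).+1).+1 by lia.
by [].
Qed.

Lemma step_here t t' : local_op t t' -> exists g, InvP t t' g pdepth.
Proof.
case.
-
  move=> c1 x c2.
  exists (gmap (fun i => [:: if i < size c1 then i else i.+1]) (fun _ => id)).
  apply: (gmap1 (s := fun i => if i < size c1 then i else i.+1)).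
  + move=> i j /eqP ij; case: (ltnP i (size c1)); case: (ltnP j (size c1)) => Hj Hi;
    apply/eqP; lia.
  + move=> i x' E; exists x'; split; last exact: InvP_refl.
    rewrite nth_error_mid -E nth_error_cat.
    case: (ltnP i (size c1)) => H; first by rewrite H.
    rewrite ifF; last by lia.
    rewrite ifF; last by lia.
    by rewrite subSS.
-
  move=> c1 c2.
  exists (gmap (fun i => [:: i]) (fun i => if i == size c1 then (fun _ => [:: 0]) else id)).
  apply: (gmap1 (s := id)) => // i x'.
  rewrite !nth_error_mid; case: ltnP => H.
  + by move=> E; exists x'; rewrite ifF; [split => //; exact: InvP_refl | lia].
  + case: eqP => [_ [<-]|ne E]; first by exists (Node [:: leaf]); split => //; exact: InvP_leaf.
    by exists x'; split => //; exact: InvP_refl.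
-
  move=> c1 d ds c2.
  set k := size c1; set m := size (d :: ds).
  exists (gmap (fun i => if i < k then [:: i] else if i < k + m then [:: k; 0; i - k]
                         else [:: i - m + 1]) (fun _ => id)).
  apply: gmapP.
  + move=> i x' E; rewrite nth_error_cat nth_error_cat -/k -/m in E.
    exists x'; split; last (split; last exact: InvP_refl).
    * case: ltnP E => H1 E; first by rewrite /= nth_error_cat -/k H1 E.
      case: ltnP E => H2 E.
      - rewrite ifT; last by lia.
        by rewrite /= nth_error_mid -/k ltnn eqxx /= E.
      - rewrite ifF; last by lia.
        rewrite /= nth_error_mid -/k ifF; last by lia.
        rewrite ifF; last by lia.
        have -> : i - m + 1 - k.+1 = i - k - m by lia.
        by rewrite E.
    * by case: ifP => //; case: ifP.
  + move=> i j x' y' /eqP ij _ _.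
    case: (ltnP i k) => Hi; case: (ltnP j k) => Hj; 
      try case: (ltnP i (k + m)) => Hi'; try case: (ltnP j (k + m)) => Hj';
      try (split; [apply: incomp_hd; apply/eqP; lia | by rewrite /= ifF //; apply/eqP; lia]).
    have -> : [:: k; 0; i - k] = [:: k; 0] ++ [:: i - k] by [].
    have -> : [:: k; 0; j - k] = [:: k; 0] ++ [:: j - k] by [].
    rewrite nca_cat; split; first by apply: incomp_catl; apply: incomp_hd; apply/eqP; lia.
    by rewrite /= ifF //; apply/eqP; lia.
-
  move=> cs cs' /Permutation_nth_error [_ [f [inj Hf]]].
  exists (gmap (fun i => [:: f i]) (fun _ => id)).
  apply: (gmap1 (s := f)).
  + by move=> i j ij; apply/eqP => /inj /eqP; rewrite (negbTE ij).
  + by move=> i x' E; exists x'; rewrite -Hf E; split => //; exact: InvP_refl.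
Qed.


Lemma step_InvP t t' : at_some_node local_op t t' -> exists g, InvP t t' g pdepth.
Proof.
elim=> [a b /step_here //|c1 x x' c2 _ [g Hg]].
exists (gmap (fun i => [:: i]) (fun i => if i == size c1 then g else id)).
apply: (gmap1 (s := id)) => // i y'.
rewrite !nth_error_mid; case: ltnP => H.
- by move=> E; exists y'; rewrite ifF; [split => //; exact: InvP_refl | lia].
- case: eqP => [_ [<-]|ne E]; first by exists x.
  by exists y'; split => //; exact: InvP_refl.
Qed.

Lemma impl_InvP T T'' : implements T T'' -> exists g, InvP T T'' g pdepth.
Proof.
elim=> [a b /step_InvP //|a|a b c _ [g1 H1] _ [g2 H2]].
- by exists id; exact: InvP_refl.
- by exists (fun p => g1 (g2 p)); exact: InvP_comp H1 H2.
Qed.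

Lemma gmapG cs cs' pr h (pic : nat -> seq nat -> bool) pi :
 (forall i x', List.nth_error cs' i = Some x' -> exists x,
    subtree_at (Node cs) (pr i) = Some x /\ InvP x x' (h i) (pic i) /\
    forall q, pi (i :: q) = odd (size (pr i)) (+) pic i q) ->
 (forall i j x' y', i != j -> List.nth_error cs' i = Some x' ->
    List.nth_error cs' j = Some y' ->
    incomp (pr i) (pr j) /\ odd (size (nca (pr i) (pr j))) = pi [::]) ->
 InvP (Node cs) (Node cs') (gmap pr h) pi.
Proof.
move=> Hc Hp; split; [|split].
- case=> [|i q] /=; first by [].
  move/node_cons=> [x' [E Hq]].
  have [x [Ex [[N _] _]]] := Hc i x' E.
  by rewrite /is_node subtree_cat Ex; apply: N.
- case=> [|i u] v Hu Hv H; first by exists (gmap pr h v).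
  case: H => r e; subst v.
  have [x' [E Hu']] := node_cons Hu.
  have [x'' [E' Hv']] := node_cons Hv.
  rewrite E in E'; case: E' => <- in Hv'.
  have [x [Ex [[N [A _]] _]]] := Hc i x' E.
  rewrite /=; apply: pre_catl; apply: A => //; exact: pre_cat.
- case=> [|i p] [|j q] Hu Hv H.
  + by case: (incomp_irr H).
  + by case: H => H _; case: H; exists (j :: q).
  + by case: H => _ H; case: H; exists (i :: p).
  have [x' [E Hp']] := node_cons Hu.
  have [y' [E' Hq']] := node_cons Hv.
  case: (eqVneq i j) H E' => [<-|ij] H E'.
  + rewrite E in E'; case: E' => <- in Hq'.
    have H' := proj1 (incomp_cons i p q) H.
    have [x [Ex [[N [A S]] Hpi]]] := Hc i x' E.
    have [H1 e1] := S p q Hp' Hq' H'.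
    rewrite /= nca_cat size_cat oddD e1 /= eqxx Hpi.
    by split => //; apply: incomp_catl.
  + have [H1 e1] := Hp i j x' y' ij E E'.
    have [e2 H2] := incomp_pre H1 (pre_cat (pr i) (h i p)) (pre_cat (pr j) (h j q)).
    by rewrite /= e2 (negbTE ij).
Qed.

Fixpoint tree_ind' (P : tree -> Prop)
  (H : forall cs, (forall x, List.In x cs -> P x) -> P (Node cs)) (t : tree) : P t :=
  match t with
  | Node cs => H cs ((fix go (l : list tree) : forall x, List.In x l -> P x :=
      match l with
      | [::] => fun x (Hin : List.In x [::]) => False_ind _ Hin
      | y :: l' => fun x (Hin : List.In x (y :: l')) =>
          match Hin with
          | or_introl e => eq_ind y P (tree_ind' H y) x e
          | or_intror h => go l' x h
          end
      end) cs)
  end.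

Lemma InvP_leaf_id pi : InvP leaf leaf id pi.
Proof.
split; [|split] => //.
- by move=> u v /node_leaf -> /node_leaf -> /incomp_irr.
Qed.

Lemma gadget t : full_binary t -> forall (pi : seq nat -> bool) (par : bool),
  exists t'' h, no_deg1 t'' /\ nleaves t'' + 1 <= 2 * nleaves t /\
    InvP t'' t h (fun w => pi w (+) par).
Proof.
elim/tree_ind': t => cs IH.
case: cs IH => [|a [|b [|c cs]]] IH //=.
- move=> _ pi par; exists leaf, id; split => //; split => //; exact: InvP_leaf_id.
- move=> /andP [Ha /andP [Hb _]] pi par.
  set w := pi [::] (+) par.
  have [ta [ha [Na [La Ia]]]] := IH a (or_introl erefl) Ha (fun q => pi (0 :: q)) (par (+) ~~ w).
  have [tb [hb [Nb [Lb Ib]]]] := IH b (or_intror (or_introl erefl)) Hb (fun q => pi (1 :: q)) (par (+) ~~ w).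
  set pic := fun i q => if i == 0 then pi (0 :: q) (+) (par (+) ~~ w) else pi (1 :: q) (+) (par (+) ~~ w).
  set h := fun i => if i == 0 then ha else hb.
  have Hchild : forall (pr : nat -> seq nat) (cs : seq tree),
      (forall i, odd (size (pr i)) = ~~ w) ->
      (forall i x, List.nth_error [:: ta; tb] i = Some x -> subtree_at (Node cs) (pr i) = Some x) ->
      (incomp (pr 0) (pr 1) /\ odd (size (nca (pr 0) (pr 1))) = w) ->
      InvP (Node cs) (Node [:: a; b]) (gmap pr h) (fun w0 => pi w0 (+) par).
  { move=> pr cs' Hodd Hsub [Hinc Hw].
    apply: (gmapG (pic := pic)).
    + case=> [|[|i]] x' /=; last by case: i.
      * case=> <-; exists ta; split; first by apply: Hsub.
        split; first exact: Ia.
        by move=> q; rewrite Hodd /pic /=; rewrite /w; destruct (pi (0 :: q)), (pi [::]), par.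
      * case=> <-; exists tb; split; first by apply: Hsub.
        split; first exact: Ib.
        by move=> q; rewrite Hodd /pic /=; rewrite /w; destruct (pi (1 :: q)), (pi [::]), par.
    + case=> [|[|i]] [|[|j]] x' y' //= _; try by case: i.
      all: try by move=> _; case: j.
      all: move=> _ _.
      all: first [ by split; [exact: Hinc | rewrite Hw /w; destruct (pi [::]), par]
                 | by split; [exact: incomp_sym | rewrite nca_sym Hw /w; destruct (pi [::]), par]]. }
  case Ew: w.
  + exists (Node [:: Node [:: ta; tb]; leaf]), (gmap (fun i => [:: 0; i]) h).
    split; first by rewrite /= Na Nb.
    split; first by rewrite /=; lia.
    apply: Hchild.
    * by move=> i; rewrite Ew.
    * by move=> i x /= ->.
    * by split; [apply/(incomp_cons 0); exact: incomp_hd | rewrite /= Ew].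
  + exists (Node [:: ta; tb]), (gmap (fun i => [:: i]) h).
    split; first by rewrite /= Na Nb.
    split; first by rewrite /=; lia.
    apply: Hchild.
    * by move=> i; rewrite Ew.
    * by move=> i x /= ->.
    * by split; [apply: incomp_hd | rewrite /= Ew].
Qed.

Lemma fb_sub t u s : full_binary t -> subtree_at t u = Some s -> full_binary s.
Proof.
elim: u t => [|i u IH] [cs] /=; first by move=> H [<-].
case: cs => [|a [|b [|c cs]]] //=; first by case: i.
move=> /andP [Ha /andP [Hb _]].
case: i => [|[|i]] //=; [exact: IH | exact: IH | by case: i].
Qed.

Lemma inner2 t u i r : full_binary t -> is_node t (u ++ i :: r) ->
  exists a b, subtree_at t u = Some (Node [:: a; b]) /\ i < 2.
Proof.
move=> Ht; rewrite /is_node subtree_cat.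
case E: (subtree_at t u) => [[cs]|] //.
have := fb_sub Ht E.
case: cs E => [|a [|b [|c cs]]] E //=; first by move=> _; case: i.
move=> _ H; exists a, b; split => //; move: H.
by case: i => [|[|i]] //=; case: i.
Qed.

Lemma children2 t u a b : subtree_at t u = Some (Node [:: a; b]) ->
  is_node t (u ++ [:: 0]) /\ is_node t (u ++ [:: 1]).
Proof. by move=> E; rewrite /is_node !subtree_cat E. Qed.

Section Final.
Variables (T T' : tree) (G : seq nat -> seq nat) (c : seq nat -> bool).
Hypothesis HT' : full_binary T'.
Hypothesis HG : InvP T T' G c.

Definition F u := match subtree_at T' u with
  | Some (Node [:: _; _]) => nca (G (u ++ [:: 0])) (G (u ++ [:: 1]))
  | _ => G u end.

Lemma inc01 u a b : subtree_at T' u = Some (Node [:: a; b]) ->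
  incomp (G (u ++ [:: 0])) (G (u ++ [:: 1])) /\
  odd (size (nca (G (u ++ [:: 0])) (G (u ++ [:: 1])))) = c u.
Proof.
move=> E; have [N0 N1] := children2 E.
case: HG => _ [_ S].
have I : incomp (u ++ [:: 0]) (u ++ [:: 1]) by apply: incomp_catl; exact: incomp_hd.
have [H1 e1] := S _ _ N0 N1 I.
by rewrite e1 nca_cat /= cats0.
Qed.

Lemma F_node u : is_node T' u -> is_node T (F u).
Proof.
case: HG => N _ Hu; rewrite /F.
case E: (subtree_at T' u) => [[[|a [|b [|x l]]]]|]; try exact: N.
have [N0 _] := children2 E.
apply: (node_pre (N _ N0)); exact: nca_pre_l.
Qed.

Lemma F_ge u : is_node T' u -> pre (G u) (F u).
Proof.
case: HG => N [A _] Hu; rewrite /F.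
case E: (subtree_at T' u) => [[[|a [|b [|x l]]]]|]; try exact: pre_refl.
have [N0 N1] := children2 E.
apply: pre_nca_common; apply: A => //; exact: pre_cat.
Qed.

Lemma F_lt u a b i : subtree_at T' u = Some (Node [:: a; b]) -> i < 2 ->
  pre (F u) (G (u ++ [:: i])) /\ size (F u) < size (G (u ++ [:: i])).
Proof.
move=> E Hi; have [I _] := inc01 E.
rewrite /F E.
case: i Hi => [|[|i]] // _.
- by split; [exact: nca_pre_l | exact: incomp_size].
- rewrite nca_sym; split; [exact: nca_pre_l | apply: incomp_size; exact: incomp_sym].
Qed.

Lemma F_below u i v : is_node T' v -> pre (u ++ [:: i]) v -> pre (G (u ++ [:: i])) (F v).
Proof.
case: HG => N [A _] Hv H.
apply: pre_trans (F_ge Hv); apply: A => //; exact: node_pre H.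
Qed.

Lemma F_pre u v : is_node T' v -> pre u v -> u <> v ->
  pre (F u) (F v) /\ size (F u) < size (F v).
Proof.
move=> Hv [[|i r] e] ne; first by rewrite e cats0 in ne.
rewrite e in Hv.
have [a [b [E Hi]]] := inner2 HT' Hv.
have [P S] := F_lt E Hi.
have Hb : pre (u ++ [:: i]) (u ++ i :: r) by exists r; rewrite -catA.
have Q := F_below Hv Hb.
rewrite e; split; first exact: pre_trans Q.
exact: leq_trans S (pre_size Q).
Qed.

Lemma F_nca u v : is_node T' u -> is_node T' v -> F (nca u v) = nca (F u) (F v).
Proof.
move=> Hu Hv.
case: (trich u v) => [H|[H|[w [i [j [p [q [ij [eu ev]]]]]]]]].
- case: (eqVneq u v) => [->|ne]; first by rewrite !nca_refl.
  have [P _] := F_pre Hv H (elimN eqP ne).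
  by rewrite (pre_nca H) (pre_nca P).
- case: (eqVneq v u) => [->|ne]; first by rewrite !nca_refl.
  have [P _] := F_pre Hu H (elimN eqP ne).
  by rewrite nca_sym (pre_nca H) nca_sym (pre_nca P).
- have Hu' := Hu; have Hv' := Hv.
  rewrite eu in Hu'; rewrite ev in Hv'.
  have [a [b [E Hi]]] := inner2 HT' Hu'.
  have [a' [b' [E' Hj]]] := inner2 HT' Hv'.
  have -> : nca u v = w by rewrite eu ev nca_cat nca_hd // cats0.
  have Bu : pre (G (w ++ [:: i])) (F u).
    apply: F_below Hu _; by rewrite eu; exists p; rewrite -catA.
  have Bv : pre (G (w ++ [:: j])) (F v).
    apply: F_below Hv _; by rewrite ev; exists q; rewrite -catA.
  have [I _] := inc01 E.
  rewrite /F E.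
  clear Hu' Hv' eu ev.
  case: i j ij Hi Hj Bu Bv => [|[|i]] [|[|j]] // _ _ _ Bu Bv.
  + by have [-> _] := incomp_pre I Bu Bv.
  + by have [-> _] := incomp_pre (incomp_sym I) Bu Bv; rewrite nca_sym.
Qed.

Lemma F_inj u v : is_node T' u -> is_node T' v -> F u = F v -> u = v.
Proof.
move=> Hu Hv e.
case: (trich u v) => [H|[H|[w [i [j [p [q [ij [eu ev]]]]]]]]].
- case: (eqVneq u v) => [//|ne].
  have [_ S] := F_pre Hv H (elimN eqP ne); by rewrite e ltnn in S.
- case: (eqVneq v u) => [//|ne].
  have [_ S] := F_pre Hu H (elimN eqP ne); by rewrite e ltnn in S.
- have Hu' := Hu; have Hv' := Hv.
  rewrite eu in Hu'; rewrite ev in Hv'.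
  have [a [b [E Hi]]] := inner2 HT' Hu'.
  have [a' [b' [E' Hj]]] := inner2 HT' Hv'.
  have Bu : pre (G (w ++ [:: i])) (F u).
    apply: F_below Hu _; by rewrite eu; exists p; rewrite -catA.
  have Bv : pre (G (w ++ [:: j])) (F v).
    apply: F_below Hv _; by rewrite ev; exists q; rewrite -catA.
  have [I _] := inc01 E.
  clear Hu' Hv' eu ev.
  case: i j ij Hi Hj Bu Bv => [|[|i]] [|[|j]] // _ _ _ Bu Bv.
  + have [_ K] := incomp_pre I Bu Bv; by rewrite e in K; case: (incomp_irr K).
  + have [_ K] := incomp_pre (incomp_sym I) Bu Bv; by rewrite e in K; case: (incomp_irr K).
Qed.

Lemma F_par v : is_inner T' v -> odd (depth (F v)) = c v.
Proof.
move=> [d [ds E]].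
have := fb_sub HT' E.
case: ds E => [|b [|x l]] E //= _.
have [_ e] := inc01 E.
by rewrite /depth /F E.
Qed.

End Final.

Lemma InvP_ext t t' g pi pi' : (forall w, pi w = pi' w) -> InvP t t' g pi -> InvP t t' g pi'.
Proof.
move=> E [N [A S]]; split; [|split] => // u v Hu Hv H.
by have [H1 e1] := S u v Hu Hv H; rewrite -E.
Qed.


Theorem lemma15 (n : nat) (T : tree) :
  universal (2 * n - 1) T ->
  forall T' : tree, full_binary T' -> nleaves T' = n ->
  forall c : seq nat -> bool,
  exists f : seq nat -> seq nat,
    (forall u, is_node T' u -> is_node T (f u)) /\
    (forall u v, is_node T' u -> is_node T' v -> f u = f v -> u = v) /\
    (forall u v, is_node T' u -> is_node T' v -> f (nca u v) = nca (f u) (f v)) /\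
    (forall v, is_inner T' v -> c v = false -> ~~ odd (depth (f v))) /\
    (forall v, is_inner T' v -> c v = true -> odd (depth (f v))).
Proof.
move=> HU T' HT' Hn c.
have [t'' [h [Nd [L I]]]] := gadget HT' c false.
have Himpl : implements T t''.
  apply: HU => //; rewrite Hn in L; lia.
have [g Hg] := impl_InvP Himpl.
have I' : InvP T T' (fun p => g (h p)) c.
  apply: InvP_ext (InvP_comp Hg I) => w; exact: addbF.
exists (F T' (fun p => g (h p))); split; [|split; [|split; [|split]]].
- by move=> u Hu; eapply F_node; eauto.
- by move=> u v Hu Hv; eapply F_inj; eauto.
- by move=> u v Hu Hv; eapply F_nca; eauto.
- by move=> v Hv Hc; rewrite (F_par HT' I' Hv) Hc.
- by move=> v Hv Hc; rewrite (F_par HT' I' Hv) Hc.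
Qed.
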